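(* Let $F\colon\mathsf{Set}\to\mathsf{Set}$ preserve intersections, and let $(C,c,i_C)$ be an $I$-pointed $F$-coalgebra. For every $k\in\mathbb N$, the $k$-th step $C_k\subseteq C$ of the construction of the reachable part of $(C,c,i_C)$ coincides with the $k$-th step of the construction of the reachable part of its canonical graph $(C,\tau_C\cdot c,i_C)$, regarded as an $I$-pointed $\mathcal P$-coalgebra.
   Context: On $\mathsf{Set}$ use the factorization system (surjective, injective). $F$ preserves intersections: preserves injective maps and intersections of subsets. For a functor $H$ preserving intersections and a map $f\colon X\to HY$, $\ominus_f(S)$ for $S\subseteq X$ is the least $Z\subseteq Y$ such that $f|_S$ factors through $HZ\to HY$ (image of the inclusion). For an $I$-pointed $H$-coalgebra $(C,d,i_C)$ (with $d\colon C\to HC$, $i_C\colon I\to C$), its $k$-th step is defined by $C_0=i_C[I]$ (the image of $i_C$) and $C_{k+1}=\ominus_d(C_k)$. $\mathcal P$ is the power-set functor. For each set $X$, $\tau_X\colon FX\to\mathcal P X$ is $\tau_X(t)=\{x\in X\mid t\notin Fi[F(X\setminus\{x\})]\}$ with $i\colon X\setminus\{x\}\hookrightarrow X$ the inclusion; $\tau_C\cdot c$ is the canonical graph. *)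

(* Defs.v *)
(* sets are types, subsets are predicates X -> Prop. *)

Record setFunctor := SetFunctor {
  Fobj :> Type -> Type;
  fmap : forall X Y : Type, (X -> Y) -> Fobj X -> Fobj Y
}.
Arguments fmap s {X Y} _ _.

Definition is_functor (F : setFunctor) : Prop :=
  (forall X (t : F X), fmap F (fun x : X => x) t = t) /\
  (forall X Y Z (f : X -> Y) (g : Y -> Z) (t : F X),
      fmap F (fun x => g (f x)) t = fmap F g (fmap F f t)).

Definition incl {Y : Type} (P : Y -> Prop) : {y : Y | P y} -> Y :=
  fun s => proj1_sig s.

Definition Fimg (F : setFunctor) {Y : Type} (P : Y -> Prop) : F Y -> Prop :=
  fun t => exists s : F {y : Y | P y}, fmap F (incl P) s = t.

Definition injective {X Y : Type} (f : X -> Y) : Prop :=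
  forall x x', f x = f x' -> x = x'.

Definition preserves_intersections (F : setFunctor) : Prop :=
  (forall X Y (f : X -> Y), injective f -> injective (fmap F f)) /\
  (forall (Y : Type) (J : Type) (A : J -> Y -> Prop) (t : F Y),
      Fimg F (fun y => forall j, A j y) t <-> (forall j, Fimg F (A j) t)).

(* ominus_f(S): the least Z subset of Y such that f restricted to S factors
   through F(incl_Z), i.e. the intersection of all such Z. *)
Definition ominus (H : setFunctor) {X Y : Type} (f : X -> H Y) (S : X -> Prop)
  : Y -> Prop :=
  fun y => forall Z : Y -> Prop, (forall x, S x -> Fimg H Z (f x)) -> Z y.

Fixpoint kstep (H : setFunctor) {I C : Type} (d : C -> H C) (i : I -> C)
  (k : nat) : C -> Prop :=
  match k with
  | O => fun x => exists j : I, i j = x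
  | S k' => ominus H d (kstep H d i k')
  end.

Definition Pow : setFunctor :=
  {| Fobj := fun X => X -> Prop;
     fmap := fun X Y (f : X -> Y) (A : X -> Prop) =>
               fun y => exists x, A x /\ f x = y |}.

Definition tau (F : setFunctor) (X : Type) (t : F X) : Pow X :=
  fun x => ~ Fimg F (fun y : X => y <> x) t.

(* Main.v *)
Require Import Defs.
From Stdlib Require Import Classical FunctionalExtensionality PropExtensionality.

Lemma Fimg_mono (F : setFunctor) (HF : is_functor F) (Y : Type)
  (P Q : Y -> Prop) (t : F Y) :
  (forall y, P y -> Q y) -> Fimg F P t -> Fimg F Q t.
Proof.
  intros H [s Hs].
  exists (fmap F (fun p : {y : Y | P y} => exist Q (proj1_sig p) (H _ (proj2_sig p))) s).
  destruct HF as [_ Hc].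
  rewrite <- Hc. exact Hs.
Qed.

Lemma Fimg_tau (F : setFunctor) (HF : is_functor F)
  (Hint : preserves_intersections F) (Y : Type) (Z : Y -> Prop) (t : F Y) :
  Fimg F Z t <-> (forall x, tau F Y t x -> Z x).
Proof.
  split.
  - intros HZ x Ht. apply NNPP. intro nZ. apply Ht.
    apply (Fimg_mono F HF Y Z); [|exact HZ].
    intros y Zy e. subst. contradiction.
  - intros Hsub.
    destruct Hint as [_ Hi].
    assert (H1 : Fimg F (fun y => forall j : {x : Y | ~ tau F Y t x},
                   (fun j y => y <> proj1_sig j) j y) t).
    { apply (proj2 (Hi Y _ (fun j y => y <> proj1_sig j) t)).
      intros [j Hj]. simpl. unfold tau in Hj. apply NNPP. exact Hj. }
    revert H1. apply (Fimg_mono F HF Y _ Z).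
    simpl. intros y Hy. apply NNPP. intro nZ.
    assert (nt : ~ tau F Y t y) by (intro T; apply nZ, Hsub, T).
    exact (Hy (exist _ y nt) eq_refl).
Qed.

Lemma Pow_img (Y : Type) (Z A : Y -> Prop) :
  Fimg Pow Z A <-> (forall x, A x -> Z x).
Proof.
  split.
  - intros [s Hs] x Ax. rewrite <- Hs in Ax. destruct Ax as [[p Hp] [_ E]].
    simpl in E. subst. exact Hp.
  - intros H. exists (fun p : {y : Y | Z y} => A (proj1_sig p)).
    apply functional_extensionality. intro y. apply propositional_extensionality.
    simpl. split.
    + intros [[p Hp] [Ap E]]. simpl in *. subst. exact Ap.
    + intros Ay. exists (exist _ y (H y Ay)). simpl. auto.
Qed.

Theorem corollary5p26 (F : setFunctor) (HF : is_functor F)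
  (Hint : preserves_intersections F)
  (I C : Type) (c : C -> F C) (iC : I -> C) :
  forall (k : nat) (x : C),
    kstep F c iC k x <-> kstep Pow (fun y => tau F C (c y)) iC k x.
Proof.
  induction k as [|k IH]; intros x; simpl.
  - tauto.
  - unfold ominus. split.
    + intros H Z HZ. apply H. intros y Sy.
      apply (Fimg_tau F HF Hint). apply (Pow_img C Z).
      apply HZ. apply IH. exact Sy.
    + intros H Z HZ. apply H. intros y Sy.
      apply (Pow_img C Z). apply (Fimg_tau F HF Hint).
      apply HZ. apply IH. exact Sy.
Qed.
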